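(* For a finite group $G$ and a nonnormal subgroup $H$ of $G$ with $H\cong\mathbb Z_2$, let $r$ be the number of fixed points of the left translation action of $H$ on $G/H$ (equivalently $r=[Z_G(H):H]$, where $Z_G(H)$ is the centralizer of $H$) and let $q$ be the number of two-element orbits of this action (so $[G:H]=r+2q$). Then a pair $(r,q)$ of positive integers arises in this way from some such $G$ and $H$ if and only if $r$ divides $2q$. *)

(* Defs.v *)
From mathcomp Require Import all_boot all_fingroup.
Set Implicit Arguments. Unset Strict Implicit. Unset Printing Implicit Defensive.
Local Open Scope group_scope.

Section LeftTranslation.
Variable gT : finGroupType.

Definition ltrans_orbit (H C : {set gT}) : {set {set gT}} :=
  [set h *: C | h in H].

Definition n_fixed_cosets (H G : {set gT}) : nat :=
  #|[set C in lcosets H G | [forall h in H, h *: C == C]]|.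

Definition n_two_orbits (H G : {set gT}) : nat :=
  #|[set O in ltrans_orbit H @: lcosets H G | #|O| == 2]|.
End LeftTranslation.

(* Main.v *)
Require Import Defs.
From HB Require Import structures.
From mathcomp Require Import all_boot all_fingroup ssralg zmodp cyclic zify.
Set Implicit Arguments. Unset Strict Implicit. Unset Printing Implicit Defensive.
Local Open Scope group_scope.

Lemma c2 (T : finType) (a b : T) : (#|[set a; b]| == 2) = (a != b).
Proof. by rewrite cards2; case: (a != b). Qed.

Section Key.
Variable gT : finGroupType.

Lemma order2_set (H : {group gT}) : #|H| = 2 ->
  exists h, [/\ h != 1, h * h = 1 & H :=: [set 1; h]].
Proof.
move=> H2.
have : #|H :\ 1| == 1%N by apply/eqP; have := cardsD1 1 H; rewrite group1 H2 => -[->].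
case/cards1P=> h Hh.
have hH : h \in H :\ 1 by rewrite Hh set11.
move: (hH); rewrite !inE => /andP[h1 hin].
have HE : H :=: [set 1; h] by rewrite -Hh setD1K ?group1.
exists h; split=> //.
have : h * h \in H by rewrite groupM.
rewrite HE !inE => /orP[/eqP //|/eqP hh].
have h1' : h = 1 by apply: (mulgI h); rewrite mulg1.
by rewrite h1' eqxx in h1.
Qed.

Lemma key (G H : {group gT}) (h : gT) : H \subset G -> h != 1 -> h * h = 1 ->
  H :=: [set 1; h] ->
  (n_fixed_cosets H G * 2 = #|'C_G[h]| /\
  n_fixed_cosets H G + n_two_orbits H G * 2 = #|G : H|)%N.
Proof.
move=> sHG h1 hh HE.
have fixE C : [forall h' in H, h' *: C == C] = (h *: C == C).
  apply/forall_inP/eqP => [E|E h']; first by apply/eqP/E; rewrite HE !inE eqxx orbT.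
  by rewrite HE !inE => /orP[/eqP->|/eqP->]; [rewrite lcoset1 | rewrite E].
have fixx x : (h *: (x *: H) == x *: H) = (x \in 'C[h]).
  rewrite -lcosetM (sameP eqP lcoset_eqP) mem_lcoset HE in_set2.
  have -> : (x^-1 * (h * x) == 1) = false.
    apply/negbTE; rewrite -(inj_eq (mulgI x)) mulKVg mulg1.
    by rewrite -{2}(mul1g x) (inj_eq (mulIg x)).
  rewrite /= -(inj_eq (mulgI x)) mulKVg.
  apply/idP/idP => [/eqP e | xc]; first by apply/cent1P; rewrite /commute e.
  by rewrite (cent1P xc).
have hG : h \in G by apply: (subsetP sHG); rewrite HE !inE eqxx orbT.
have sHC : H \subset 'C_G[h].
  by apply/subsetP => y; rewrite HE in_set2 => /orP[/eqP->|/eqP->]; rewrite ?group1 // in_setI hG cent1id.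
have FE : [set C in lcosets H G | [forall h' in H, h' *: C == C]] = lcosets H 'C_G[h].
  apply/setP => C; rewrite inE fixE; apply/andP/idP.
    case=> /lcosetsP[x xG ->]; rewrite fixx => xC.
    by apply/lcosetsP; exists x => //; rewrite in_setI xG.
  case/lcosetsP=> x; rewrite in_setI => /andP[xG xC] ->.
  by split; [apply/lcosetsP; exists x | rewrite fixx].
have r2 : (n_fixed_cosets H G * 2 = #|'C_G[h]|)%N.
  rewrite /n_fixed_cosets FE card_lcosets mulnC.
  by rewrite -{1}(_ : #|H| = 2) ?(Lagrange sHC) // HE cards2 eq_sym h1.
split=> //.
set L := lcosets H G.
set O := ltrans_orbit H.
have OE C : O C = [set C; h *: C] by rewrite /O /ltrans_orbit HE imsetU1 imset_set1 lcoset1.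
have hL C : C \in L -> h *: C \in L.
  by case/lcosetsP=> x xG ->; apply/lcosetsP; exists (h * x); rewrite ?groupM // lcosetM.
have hhC C : h *: (h *: C) = C by rewrite -lcosetM hh lcoset1.
set N := [set C in L | h *: C != C].
have Ob2 : [set X in O @: L | #|X| == 2] = O @: N.
  apply/setP => X; rewrite inE; apply/andP/imsetP.
    case=> /imsetP[C CL ->]; rewrite [O C]OE c2 => ne.
    by exists C => //; rewrite inE CL eq_sym.
  case=> C; rewrite inE => /andP[CL ne] ->.
  by split; [apply/imsetP; exists C | rewrite OE c2 eq_sym].
have OEq C E : E \in O C -> O E = O C.
  by rewrite OE !inE => /orP[/eqP->|/eqP->] //; rewrite !OE hhC setUC.
have part : partition (O @: N) N.
  apply/and3P; split.
  - apply/eqP/setP => D; apply/bigcupP/idP => [[X /imsetP[C CN ->]] | DN].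
      move: CN; rewrite OE !inE => /andP[CL ne] /orP[/eqP->|/eqP->].
        by rewrite CL.
      by rewrite hL // hhC eq_sym.
    by exists (O D); [apply/imsetP; exists D | rewrite OE !inE eqxx].
  - apply/trivIsetP => X Y /imsetP[C CN ->] /imsetP[D DN ->] ne.
    rewrite -setI_eq0; apply: contraR ne => /set0Pn [E]; rewrite inE => /andP[EC ED].
    by rewrite -(OEq _ _ EC) -(OEq _ _ ED).
  - apply/imsetP => -[C _ /setP/(_ C)]; by rewrite OE !inE eqxx.
have cN : (#|N| = #|O @: N| * 2)%N.
  apply: card_uniform_partition part => X /imsetP[C]; rewrite inE => /andP[_ ne] ->.
  by apply/eqP; rewrite OE c2 eq_sym ne.
rewrite /n_two_orbits -/L -/O Ob2 -cN /n_fixed_cosets -card_lcosets -/L.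
rewrite -(cardsID [set C | h *: C == C] L); congr (_ + _); apply: eq_card => C.
  by rewrite !inE fixE.
by rewrite !inE andbC.
Qed.
End Key.
Section SD.
Variables a m : nat.
Definition sdT := ('I_a.+1 * 'I_m.+1 * bool)%type.
HB.instance Definition _ := Finite.copy sdT ('I_a.+1 * 'I_m.+1 * bool)%type.
Definition sgn (b : bool) (y : 'I_m.+1) : 'I_m.+1 := if b then (- y)%R else y.
Definition sd_mul (u v : sdT) : sdT :=
  ((u.1.1 + v.1.1)%R, (u.1.2 + sgn u.2 v.1.2)%R, u.2 (+) v.2).
Definition sd_one : sdT := (0%R, 0%R, false).
Definition sd_inv (u : sdT) : sdT := ((- u.1.1)%R, (- sgn u.2 u.1.2)%R, u.2).
Lemma sd_mulA : associative sd_mul.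
Proof.
move=> [[x1 y1] b1] [[x2 y2] b2] [[x3 y3] b3]; rewrite /sd_mul /=.
congr (_, _, _); first exact: GRing.addrA.
  by case: b1; case: b2; rewrite /sgn /= ?GRing.opprD ?GRing.opprK GRing.addrA.
exact: addbA.
Qed.
Lemma sd_mul1 : left_id sd_one sd_mul.
Proof. by move=> [[x y] b]; rewrite /sd_mul /= !GRing.add0r. Qed.
Lemma sd_mulV : left_inverse sd_one sd_inv sd_mul.
Proof.
move=> [[x y] b]; rewrite /sd_mul /sd_one /=.
by rewrite !GRing.addNr; case: b; rewrite /= ?GRing.opprK ?GRing.addNr ?addbb ?GRing.addrN.
Qed.
HB.instance Definition _ := Finite_isGroup.Build sdT sd_mulA sd_mul1 sd_mulV.

Lemma sdmulE (u v : sdT) : u * v = sd_mul u v. Proof. by []. Qed.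
Lemma sdoneE : (1 : sdT) = sd_one. Proof. by []. Qed.
Definition sds : sdT := (0%R, 0%R, true).

Lemma sgn0 b : sgn b 0%R = 0%R.
Proof. by case: b; rewrite /sgn ?GRing.oppr0. Qed.

Lemma cent_sds (u : sdT) : (u \in 'C[sds]) = ((- u.1.2)%R == u.1.2).
Proof.
case: u => [[x y] b]; apply/cent1P/eqP;
  rewrite /commute !sdmulE /sd_mul /sds /= sgn0 !GRing.addr0 !GRing.add0r /sgn /= addbT.
  by move=> [e]; apply/esym.
by move=> ->.
Qed.

Lemma card_sdT : #|[set: sdT]| = (a.+1 * m.+1 * 2)%N.
Proof. by rewrite cardsT /sdT !card_prod !card_ord card_bool. Qed.

Lemma card_cent :
  #|'C[sds]| = (a.+1 * #|[set y : 'I_m.+1 | (- y)%R == y]| * 2)%N.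
Proof.
have -> : 'C[sds] = setX (setX [set: 'I_a.+1] [set y : 'I_m.+1 | (- y)%R == y]) [set: bool].
  by apply/setP => u; rewrite cent_sds !inE /= andbT.
by rewrite !cardsX !cardsT !card_ord card_bool.
Qed.

Lemma order_sds : #[sds] = 2.
Proof.
have ss : sds * sds = 1.
  by rewrite sdmulE sdoneE /sd_mul /sds /sd_one /= ?sgn0 ?GRing.oppr0 !GRing.addr0.
have s1 : sds != 1 by rewrite sdoneE.
have : (#[sds] %| 2)%N by rewrite order_dvdn expgS expg1 ss.
have : #[sds] != 1%N by rewrite order_eq1.
have := order_gt0 sds.
case: #[sds] => [|[|[|k]]] //; by move=> _ _ /dvdn_leq.
Qed.
End SD.

Lemma cardY m : #|[set y : 'I_m.+1 | (- y)%R == y]| = if odd m.+1 then 1%N else 2%N.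
Proof.
have E (y : 'I_m.+1) : ((- y)%R == y) = (m.+1 %| y + y)%N.
  by rewrite eq_sym -GRing.addr_eq0 -val_eqE /=.
case hodd : (odd m.+1).
  have -> : [set y : 'I_m.+1 | (- y)%R == y] = [set ord0].
    apply/setP => y; rewrite inE E in_set1 -val_eqE /= addnn -muln2 Gauss_dvdl ?coprimen2 //.
    apply/idP/eqP => [d|->//]; apply/eqP; rewrite -leqn0 leqNgt; apply/negP => yp.
    by have := dvdn_leq yp d; rewrite leqNgt ltn_ord.
  by rewrite cards1.
have Mn : m.+1 = ((m.+1)./2 * 2)%N.
  by rewrite muln2 -[LHS]odd_double_half hodd add0n.
set n := (m.+1)./2 in Mn.
have n0 : (0 < n)%N by move: Mn; case: n.
have nM : (n < m.+1)%N by rewrite [X in (_ < X)%N]Mn muln2 -addnn -{1}(addn0 n) ltn_add2l.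
have -> : [set y : 'I_m.+1 | (- y)%R == y] = [set ord0; Ordinal nM].
  apply/setP => y; rewrite inE E !in_set2 -!val_eqE /= addnn -muln2.
  rewrite [X in (X %| _)%N]Mn dvdn_pmul2r //.
  apply/idP/idP => [/dvdnP[k yk]|/orP[/eqP->|/eqP->]] //.
  have : (k * n < 2 * n)%N by rewrite -yk mulnC -Mn ltn_ord.
  rewrite ltn_pmul2r //; case: k yk => [|[|]] //= ->.
    by rewrite mul0n eqxx.
  by rewrite mul1n eqxx orbT.
by rewrite cards2 -val_eqE /= eq_sym -lt0n n0.
Qed.

Lemma normal_two (gT : finGroupType) (G H : {group gT}) (h : gT) :
  H \subset G -> h != 1 -> h * h = 1 -> H :=: [set 1; h] -> H <| G ->
  n_two_orbits H G = 0%N.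
Proof.
move=> sHG h1 hh HE nHG.
have [e1 e2] := key sHG h1 hh HE.
have L := Lagrange sHG.
have H2 : #|H| = 2 by rewrite HE cards2 eq_sym h1.
have CG : 'C_G[h] = G.
  apply/setIidPl/subsetP => x xG.
  case/andP: nHG => _ /subsetP /(_ x xG) xN.
  have : h ^ x \in H by rewrite memJ_norm // HE in_set2 eqxx orbT.
  rewrite HE in_set2 conjg_eq1 (negbTE h1) /= => /eqP e.
  have e' : x * (x^-1 * (h * x)) = x * h by congr (x * _); exact: e.
  rewrite mulKVg in e'.
  by rewrite cent1E e'.
rewrite CG H2 in e1 L.
lia.
Qed.

Lemma concrete (a m : nat) :
  let G := [set: sdT a m]%G in let H := <[sds a m]>%G in
  [/\ H \subset G, #|H| = 2,
     (n_fixed_cosets H G * 2 = a.+1 * #|[set y : 'I_m.+1 | (- y)%R == y]| * 2)%N,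
     (n_fixed_cosets H G + n_two_orbits H G * 2 = a.+1 * m.+1)%N &
     (0 < n_two_orbits H G)%N -> ~~ (H <| G)].
Proof.
move=> G H.
have sHG : H \subset G by apply: subsetT.
have H2 : #|H| = 2 by apply: order_sds.
have [h [h1 hh HE]] := order2_set H2.
have hs : h = sds a m.
  have : sds a m \in H by apply: cycle_id.
  rewrite HE in_set2 => /orP[/eqP e|/eqP //].
  by move: e; rewrite sdoneE.
subst h.
have [e1 e2] := key sHG h1 hh HE.
have L := Lagrange sHG.
rewrite /G /= setTI card_cent in e1.
have cG : #|G| = (a.+1 * m.+1 * 2)%N by apply: card_sdT.
rewrite H2 cG in L.
split => //.
  have L' : #|G : H| = (a.+1 * m.+1)%N by apply/eqP; rewrite -(eqn_pmul2r (isT : (0 < 2)%N)) -L mulnC.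
  by rewrite e2 L'.
by move=> q0; apply/negP => nHG; rewrite (normal_two sHG h1 hh HE nHG) in q0.
Qed.

Theorem proposition7p1 (r q : nat) (hr : 0 < r) (hq : 0 < q) :
  (exists (gT : finGroupType) (G H : {group gT}),
      [/\ H \subset G, #|H| = 2, ~~ (H <| G),
          n_fixed_cosets H G = r & n_two_orbits H G = q])
  <-> r %| 2 * q.
Proof.
split.
  move=> [gT [G [H [sHG H2 _ nf nt]]]].
  have [h [h1 hh HE]] := order2_set H2.
  have [e1 e2] := key sHG h1 hh HE.
  have L := Lagrange sHG.
  have d : (#|'C_G[h]| %| #|G|)%N := cardSg (subsetIl G 'C[h]).
  rewrite -e1 -L H2 -e2 nf nt [(r * 2)%N]mulnC dvdn_pmul2l // in d.
  by rewrite mulnC -(dvdn_addr _ (dvdnn r)).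
move=> d.
set k := (2 * q %/ r)%N.
have rk : (k * r = 2 * q)%N by apply: divnK.
case hn : (odd k.+1).
  have [sHG H2 e1 e2 nN] := concrete r.-1 k.
  rewrite cardY hn prednK // in e1 e2.
  exists (sdT r.-1 k), [set: sdT r.-1 k]%G, <[sds r.-1 k]>%G.
  move: e1 e2 nN; set nf := n_fixed_cosets _ _; set nt := n_two_orbits _ _ => e1 e2 nN.
  have f : nf = r by nia.
  have t : nt = q by nia.
  by split => //; apply: nN; rewrite t.
have re : ~~ odd r.
  apply/negP => ro; move: d; rewrite Gauss_dvdr ?coprimen2 // => /dvdnP[j qj].
  have : k = (2 * j)%N by apply/eqP; rewrite -(eqn_pmul2r hr) rk qj mulnA.
  by move=> kj; move: hn; rewrite /= kj oddM.
have rE : r = (r./2 * 2)%N by rewrite muln2 -[LHS]odd_double_half (negbTE re) add0n.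
have r2 : (0 < r./2)%N by move: rE hr; case: (r./2) => [->|].
have [sHG H2 e1 e2 nN] := concrete r./2.-1 (2 * k).+1.
rewrite cardY /= prednK // in e1 e2.
rewrite oddM /= in e1.
exists (sdT r./2.-1 (2 * k).+1), [set: sdT r./2.-1 (2 * k).+1]%G, <[sds r./2.-1 (2 * k).+1]>%G.
move: e1 e2 nN; set nf := n_fixed_cosets _ _; set nt := n_two_orbits _ _ => e1 e2 nN.
have f : nf = r by lia.
have t : nt = q by lia.
by split => //; apply: nN; rewrite t.
Qed.
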